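(* Let $N\ge 2$, $K\ge 2$ be integers, $d_m=N-1$ for $m\in[1:N]$ and $d_m=N$ for $m\in[N+1:N^K]$, $C=\left(\sum_{k=0}^{K-1}N^{-k}\right)^{-1}$, and $1\le D\le 1/C$. Let $\mathcal{F}_D$ be the set of probability vectors $P$ on $[1:N^K]$ with $\frac{1}{N-1}\sum_{m=1}^{N^K}p_md_m=D$, and $U$ the uniform distribution on $[1:N^K]$. Then the minimum $\rho_\alpha:=\min_{P\in\mathcal{F}_D}D_\alpha(P\|U)$ equals, for $0<\alpha<\infty$, $\alpha\ne1$, $$\rho_\alpha=\frac{1}{\alpha-1}\log\left[N\left(\frac{1-(N-1)(D-1)}{N}\right)^{\alpha}+(N^K-N)\left(\frac{(N-1)(D-1)}{N^K-N}\right)^{\alpha}\right]+\log N^K;$$ for $\alpha=1$, $$\rho_1=\{1-(N-1)(D-1)\}\log\frac{1-(N-1)(D-1)}{N}+(N-1)(D-1)\log\frac{(N-1)(D-1)}{N^K-N}+\log N^K;$$ and for $\alpha=\infty$, $$\rho_\infty=\log\frac{1-(N-1)(D-1)}{N}+\log N^K.$$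
   Context: Notation: $[i:j]=\{i,\dots,j\}$; logarithms are natural, with $0\log0=0$. Rényi divergence for probability vectors $P,U$ on $[1:M]$ with $u_m>0$: $D_\alpha(P\|U)=\frac{1}{\alpha-1}\log\sum_m p_m^\alpha u_m^{1-\alpha}$ for $0<\alpha<\infty,\alpha\ne1$; $D_1(P\|U)=\sum_m p_m\log\frac{p_m}{u_m}$; $D_\infty(P\|U)=\log\max_m\frac{p_m}{u_m}$. (Interpretation: optimal tradeoff between information leakage and normalized expected download cost $D$ for the symmetric Tian–Sun–Chen PIR scheme with $N$ databases, $K$ messages, message length $N-1$.) *)

(* Defs.v *)
From mathcomp Require Import all_boot all_order all_algebra.
From mathcomp Require Import all_classical all_reals all_analysis.
Set Implicit Arguments. Unset Strict Implicit. Unset Printing Implicit Defensive.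
Import Order.TTheory GRing.Theory Num.Theory.
Local Open Scope ring_scope.

Section Renyi.
Variable R : realType.
Variable M : nat.

(* probability vectors on [1:M], indexed by 'I_M (index m <-> m+1) *)
Definition prob_vec (P : 'I_M -> R) : Prop :=
  (forall m, 0 <= P m) /\ \sum_(m < M) P m = 1.

(* Renyi divergence of order alpha, 0 < alpha < oo, alpha <> 1;
   note 0 `^ alpha = 0 for alpha <> 0 (powR) *)
Definition renyi (alpha : R) (P U : 'I_M -> R) : R :=
  (alpha - 1)^-1 * ln (\sum_(m < M) P m `^ alpha * U m `^ (1 - alpha)).

(* order 1: KL divergence; the 0 log 0 = 0 convention holds via the factor P m *)
Definition renyi1 (P U : 'I_M -> R) : R :=
  \sum_(m < M) P m * ln (P m / U m).

(* order oo: log max_m p_m/u_m (all ratios are nonnegative, so 0 is a neutral seed) *)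
Definition renyi_inf (P U : 'I_M -> R) : R :=
  ln (\big[Num.max/0]_(m < M) (P m / U m)).

End Renyi.

Definition is_min_over (T : Type) (R : realType) (S : T -> Prop) (f : T -> R) (v : R) : Prop :=
  (exists x, S x /\ f x = v) /\ (forall x, S x -> v <= f x).

(* download costs: d_m = N-1 for m in [1:N], N for m in [N+1:N^K];
   0-based index m : 'I_(N^K) *)
Definition dcost (N K : nat) (m : 'I_(N ^ K)) : nat :=
  if (m < N)%N then N.-1 else N.

Definition uniform (R : realType) (M : nat) : 'I_M -> R := fun _ => (M%:R)^-1.

Definition FD (R : realType) (N K : nat) (D : R) (P : 'I_(N ^ K) -> R) : Prop :=
  prob_vec P /\ (N.-1%:R)^-1 * \sum_(m < (N ^ K)%N) P m * (@dcost N K m)%:R = D.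

Definition Ccost (R : realType) (N K : nat) : R :=
  (\sum_(k < K) (N%:R)^-k)^-1.

(* Main.v *)
Require Import Defs.
From mathcomp Require Import all_boot all_order all_algebra.
From mathcomp Require Import all_classical all_reals all_analysis.
From mathcomp.algebra_tactics Require Import ring lra.
Import Order.TTheory GRing.Theory Num.Theory.
Local Open Scope ring_scope.

Section Aux.
Variable R : realType.

Lemma young_up (x c al : R) : 0 <= x -> 0 < c -> 1 < al ->
  x * c `^ (al - 1) <= x `^ al / al + c `^ al * ((al - 1) / al).
Proof.
move=> x0 c0 a1.
have a0 : 0 < al by lra.
have a10 : 0 < al - 1 by lra.
have := @conjugate_powR R x (c `^ (al - 1)) al (al / (al - 1)) x0 (powR_ge0 _ _) a0
  (divr_gt0 a0 a10).
have e : (al - 1) * (al / (al - 1)) = al by rewrite mulrC divfK // gt_eqF.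
rewrite invf_div -powRrM e.
apply.
by field; rewrite gt_eqF.
Qed.

Lemma young_down (x c al : R) : 0 <= x -> 0 < c -> 0 < al -> al < 1 ->
  x `^ al * c `^ (1 - al) <= al * x + (1 - al) * c.
Proof.
move=> x0 c0 a0 a1.
have a10 : 0 < 1 - al by lra.
have ia0 : 0 < al^-1 by rewrite invr_gt0.
have ia10 : 0 < (1 - al)^-1 by rewrite invr_gt0.
have := @conjugate_powR R (x `^ al) (c `^ (1 - al)) al^-1 (1 - al)^-1 (powR_ge0 _ _)
  (powR_ge0 _ _) ia0 ia10.
rewrite !invrK -!powRrM !divff ?gt_eqF // (powRr1 x0) (powRr1 (ltW c0)).
rewrite (mulrC al) (mulrC (1 - al)); apply; lra.
Qed.

Lemma xlnx_tan (x c : R) : 0 <= x -> 0 < c -> x * ln c + x - c <= x * ln x.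
Proof.
move=> x0 c0; have [->|xp] := eqVneq x 0; first by rewrite !mul0r; lra.
have x1 : 0 < x by rewrite lt_def xp x0.
have cx : 0 < c / x by rewrite divr_gt0.
have := @le_ln1Dx R (c / x - 1) ltac:(lra).
rewrite addrC subrK ln_div ?posrE // => H.
have := H; rewrite -(ler_pM2l x1) !mulrBr mulr1 [x * (c / x)]mulrC divfK ?gt_eqF // => H2.
lra.
Qed.

Section Grp.
Variables (I : finType) (P : pred I) (x : I -> R) (n : R).
Hypothesis Hn : \sum_(i | P i) (1:R) = n.
Hypothesis n0 : 0 < n.
Hypothesis x0 : forall i, 0 <= x i.

Lemma cst_sum k : \sum_(i | P i) k = n * k.
Proof. by rewrite -Hn big_distrl /=; apply: eq_bigr => i _; rewrite mul1r. Qed.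

Let S := \sum_(i | P i) x i.
Let S0 : 0 <= S. Proof. exact: sumr_ge0. Qed.
Let Scase : S = 0 /\ (forall i, P i -> x i = 0) \/ 0 < S / n.
Proof.
have [S00|Sp] := eqVneq S 0.
  by left; split => //; exact: (psumr_eq0P (fun i _ => x0 i) S00).
by right; rewrite divr_gt0 // lt_def Sp S0.
Qed.
Let nc c : c = S / n -> n * c = S.
Proof. by move=> ->; rewrite mulrC divfK // gt_eqF. Qed.

Lemma grp_up al : 1 < al ->
  n * (S / n) `^ al <= \sum_(i | P i) x i `^ al.
Proof.
move=> a1; case: Scase => [[-> z]|c0].
  rewrite mul0r powR0 ?mulr0; last by rewrite gt_eqF //; lra.
  by apply: sumr_ge0 => i _; exact: powR_ge0.
set c := S / n.
have H : \sum_(i|P i) x i * c `^ (al-1) <=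
    \sum_(i|P i) (x i `^ al / al + c `^ al * ((al-1)/al)).
  by apply: ler_sum => i _; exact: young_up.
rewrite -big_distrl /= big_split /= -big_distrl /= cst_sum -/S -(nc c erefl) in H.
rewrite -mulrA mulr_powRB1 ?(ltW c0) // in H; last lra.
set t := n * c `^ al; set X := \sum_(i | P i) x i `^ al.
have a0 : 0 < al by lra.
have H2 : t * al <= X + t * (al - 1).
  have := H; rewrite -(ler_pM2r a0) => H'; apply: (le_trans H').
  have -> : ((\sum_(i | P i) x i `^ al) / al + n * (c `^ al * ((al - 1) / al))) * al
     = X + t * (al - 1) by rewrite /X /t; field; rewrite gt_eqF.
  by [].
lra.
Qed.

Lemma grp_down al : 0 < al -> al < 1 ->
  \sum_(i | P i) x i `^ al <= n * (S / n) `^ al.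
Proof.
move=> a0 a1; case: Scase => [[-> z]|c0].
  rewrite mul0r powR0 ?mulr0; last by rewrite gt_eqF.
  by rewrite big1 // => i Pi; rewrite z // powR0 // gt_eqF.
set c := S / n.
have H : \sum_(i|P i) x i `^ al * c `^ (1 - al) <=
    \sum_(i|P i) (al * x i + (1 - al) * c).
  by apply: ler_sum => i _; exact: young_down.
rewrite -big_distrl /= big_split /= -mulr_sumr cst_sum in H.
have cc : c `^ al * c `^ (1 - al) = c.
  by rewrite -powRD ?subrKC ?powRr1 ?(ltW c0) //; apply/implyP => _; rewrite gt_eqF.
have cp : 0 < c `^ (1 - al) by exact: powR_gt0.
rewrite -(ler_pM2r cp) -mulrA cc; apply: (le_trans H).
rewrite -/S -(nc c erefl) le_eqVlt; apply/orP; left; apply/eqP; ring.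
Qed.

Lemma grp_ln : S * ln (S / n) <= \sum_(i | P i) x i * ln (x i).
Proof.
case: Scase => [[-> z]|c0].
  by rewrite mul0r big1 // => i Pi; rewrite z // mul0r.
set c := S / n.
have H : \sum_(i|P i) (x i * ln c + x i - c) <= \sum_(i|P i) x i * ln (x i).
  by apply: ler_sum => i _; exact: xlnx_tan.
apply: le_trans H; rewrite !big_split /= -big_distrl /= sumrN cst_sum -/S.
rewrite -(nc c erefl); lra.
Qed.
End Grp.
End Aux.

Section Main.
Variables (R : realType) (N K : nat) (D : R).
Hypotheses (hN : (2 <= N)%N) (hK : (2 <= K)%N) (hD1 : 1 <= D) (hD2 : D <= (Ccost R N K)^-1).

Local Notation a := (1 - (N%:R - 1) * (D - 1) : R).
Local Notation b := ((N%:R - 1) * (D - 1) : R).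
Local Notation NK := ((N ^ K)%N%:R : R).
Local Notation cond := (fun m : 'I_(N ^ K) => (m < N)%N).
Local Notation ncond := (fun m : 'I_(N ^ K) => ~~ (m < N)%N).

Lemma N2 : 2 <= (N%:R : R).
Proof. by rewrite ler_nat. Qed.

Lemma NltNK : (N < N ^ K)%N.
Proof.
have -> : (N = N ^ 1)%N by rewrite expn1.
by rewrite ltn_exp2l // (leq_trans _ hN).
Qed.

Lemma NltNKr : (N%:R : R) < NK.
Proof. by rewrite ltr_nat NltNK. Qed.

Lemma split_sum (F : 'I_(N ^ K) -> R) :
  \sum_(m < N ^ K) F m = \sum_(m < N ^ K | cond m) F m + \sum_(m < N ^ K | ncond m) F m.
Proof. exact: bigID. Qed.

Lemma cnt1 : \sum_(m < N ^ K | cond m) (1:R) = N%:R.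
Proof.
rewrite (big_ord_narrow (F := fun _ => (1:R)) (ltnW NltNK)).
by rewrite sumr_const card_ord.
Qed.

Lemma cnt2 : \sum_(m < N ^ K | ncond m) (1:R) = NK - N%:R.
Proof.
have := split_sum (fun _ => 1); rewrite cnt1 sumr_const card_ord => H.
lra.
Qed.

Lemma eN1 : (N.-1%:R : R) = N%:R - 1.
Proof. by rewrite -subn1 natrB // (leq_trans _ hN). Qed.

Lemma cost_split (P : 'I_(N ^ K) -> R) :
  \sum_(m < N ^ K) P m * (dcost m)%:R =
  (\sum_(m < N ^ K | cond m) P m) * (N%:R - 1) + (\sum_(m < N ^ K | ncond m) P m) * N%:R.
Proof.
rewrite split_sum !big_distrl /=; congr (_ + _); apply: eq_bigr => m Hm.
  by rewrite /dcost Hm eN1.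
by rewrite /dcost (negbTE Hm).
Qed.

Lemma fd_split P : FD D P ->
  \sum_(m < N ^ K | cond m) P m = a /\ \sum_(m < N ^ K | ncond m) P m = b.
Proof.
move=> [[P0 P1] Hc].
rewrite split_sum in P1; rewrite cost_split eN1 in Hc.
set S1 := \sum_(m < N ^ K | cond m) P m in P1 Hc *.
set S2 := \sum_(m < N ^ K | ncond m) P m in P1 Hc *.
have n1 : (N%:R : R) - 1 != 0 by rewrite gt_eqF //; have := N2; lra.
have E : S1 * (N%:R - 1) + S2 * N%:R = (N%:R - 1) * D.
  by rewrite -Hc mulrA mulfV // mul1r.
have E2 : S2 = 1 - S1 by lra.
rewrite E2 in E; split; lra.
Qed.

Lemma Ccost_inv : (Ccost R N K)^-1 = \sum_(k < K) (N%:R)^-1 ^+ k.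
Proof. by rewrite /Ccost invrK; apply: eq_bigr => k _; rewrite exprVn. Qed.

Lemma key_aNK : (N%:R : R) <= a * NK.
Proof.
have N0 : (0 : R) < N%:R by have := N2; lra.
set y : R := (N%:R)^-1.
have y1 : y - 1 < 0 by rewrite subr_lt0 /y invf_lt1 //; have := N2; lra.
have hs := subrX1 y K.
set s := \sum_(i < K) y ^+ i in hs.
have Ds : D <= s by rewrite /s /y -Ccost_inv.
have yK : y ^+ K * NK = 1 by rewrite /y exprVn natrX mulVf // expf_neq0 // gt_eqF.
have yN : y * N%:R = 1 by rewrite /y mulVf // gt_eqF.
(* (1-y) s = 1 - y^K ; multiply by N: (N - 1) s = N - N y^K *)
have E : (N%:R - 1) * s = N%:R - N%:R * y ^+ K.
  have : N%:R * (y ^+ K - 1) = N%:R * ((y - 1) * s) by rewrite hs.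
  have yNs : y * N%:R * s = s by rewrite yN mul1r.
  lra.
have Nm : 0 < (N%:R : R) - 1 by have := N2; lra.
have : (N%:R - 1) * D <= (N%:R - 1) * s by rewrite ler_pM2l.
rewrite E => H.
have H2 : N%:R * y ^+ K <= a by lra.
have NK0 : 0 < NK by rewrite ltr0n expn_gt0 (leq_trans _ hN).
have := H2; rewrite -(ler_pM2r NK0) -mulrA yK mulr1.
done.
Qed.

Lemma a_pos : 0 < a.
Proof.
have NK0 : 0 < NK by rewrite ltr0n expn_gt0 (leq_trans _ hN).
have := key_aNK; have := N2 => h1 h2.
have : 0 < a * NK by lra.
by rewrite pmulr_lgt0.
Qed.

Lemma b_ge0 : 0 <= b.
Proof. apply: mulr_ge0; [have := N2; lra | have := hD1; lra]. Qed.

Lemma key_ba : b / (NK - N%:R) <= a / N%:R.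
Proof.
have N0 : (0 : R) < N%:R by have := N2; lra.
have d0 : 0 < NK - N%:R by have := NltNKr; lra.
rewrite ler_pdivrMr // mulrAC ler_pdivlMr //.
have := key_aNK; lra.
Qed.

Definition Ps (m : 'I_(N ^ K)) : R := if (m < N)%N then a / N%:R else b / (NK - N%:R).

Lemma N0 : (0:R) < N%:R. Proof. by have := N2; lra. Qed.
Lemma d0 : (0:R) < NK - N%:R. Proof. by have := NltNKr; lra. Qed.

Lemma Ps_ge0 m : 0 <= Ps m.
Proof.
rewrite /Ps; case: ifP => _; apply: divr_ge0.
- exact: ltW a_pos.
- exact: ltW N0.
- exact: b_ge0.
- exact: ltW d0.
Qed.

Lemma sum_c (F : 'I_(N ^ K) -> R) k : (forall m, cond m -> F m = k) ->
  \sum_(m < N ^ K | cond m) F m = N%:R * k.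
Proof. by move=> H; rewrite (eq_bigr (fun=> k)) // (@cst_sum _ _ _ _ cnt1). Qed.

Lemma sum_n (F : 'I_(N ^ K) -> R) k : (forall m, ncond m -> F m = k) ->
  \sum_(m < N ^ K | ncond m) F m = (NK - N%:R) * k.
Proof. by move=> H; rewrite (eq_bigr (fun=> k)) // (@cst_sum _ _ _ _ cnt2). Qed.

Lemma FD_Ps : FD D Ps.
Proof.
have n0 := N0; have dd := d0.
split; first split.
- exact: Ps_ge0.
- rewrite split_sum (@sum_c _ (a / N%:R)); last by move=> m Hm; rewrite /Ps Hm.
  rewrite (@sum_n _ (b / (NK - N%:R))); last by move=> m Hm; rewrite /Ps (negbTE Hm).
  by field; apply/andP; split; rewrite gt_eqF.
- rewrite cost_split (@sum_c _ (a / N%:R)); last by move=> m Hm; rewrite /Ps Hm.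
  rewrite (@sum_n _ (b / (NK - N%:R))); last by move=> m Hm; rewrite /Ps (negbTE Hm).
  rewrite eN1.
  have n1 : (N%:R : R) - 1 != 0 by rewrite gt_eqF //; have := N2; lra.
  by field; rewrite n1 !gt_eqF.
Qed.

Lemma exist_big P : FD D P -> exists m, cond m /\ a / N%:R <= P m.
Proof.
move=> HP; have [S1 _] := fd_split _ HP.
case: (boolP [exists m : 'I_(N ^ K), cond m && (a / N%:R <= P m)]).
  by move=> /existsP [m /andP [H1 H2]]; exists m.
move=> /existsPn H; exfalso.
have : \sum_(m < N ^ K | cond m) P m < \sum_(m < N ^ K | cond m) (a / N%:R).
  apply: ltr_sum.
    apply/hasP; exists (Ordinal (leq_ltn_trans (leq0n N) NltNK)).
      by rewrite mem_index_enum.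
    by rewrite /= (leq_trans _ hN).
  move=> m Hm; have := H m; rewrite Hm /= -ltNge; done.
rewrite S1 (@cst_sum _ _ _ _ cnt1) => H2.
have E : N%:R * (a / N%:R) = a by field; rewrite gt_eqF // N0.
lra.
Qed.

Lemma single_le (F : 'I_(N ^ K) -> R) m : (forall i, 0 <= F i) -> F m <= \sum_(i < N ^ K) F i.
Proof. by move=> F0; rewrite (bigD1 m) //= lerDl sumr_ge0. Qed.

Lemma NK0 : (0:R) < NK.
Proof. by rewrite ltr0n expn_gt0 (leq_trans _ hN). Qed.

Lemma renyiE al P : al != 1 -> 0 < \sum_(m < N ^ K) P m `^ al ->
  renyi al P (@uniform R (N ^ K)%N) = (al - 1)^-1 * ln (\sum_(m < N ^ K) P m `^ al) + ln NK.
Proof.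
move=> a1 X0; have nk := NK0.
rewrite /renyi /uniform -big_distrl /= lnM ?posrE //; last first.
  by apply: powR_gt0; rewrite invr_gt0.
rewrite ln_powR lnV ?posrE //.
have a10 : al - 1 != 0 by rewrite subr_eq0.
by field.
Qed.

Lemma Xstar al :
  \sum_(m < N ^ K) Ps m `^ al = N%:R * (a / N%:R) `^ al + (NK - N%:R) * (b / (NK - N%:R)) `^ al.
Proof.
rewrite split_sum (@sum_c _ ((a / N%:R) `^ al)); last by move=> m Hm; rewrite /Ps Hm.
by rewrite (@sum_n _ ((b / (NK - N%:R)) `^ al)) // => m Hm; rewrite /Ps (negbTE Hm).
Qed.

Lemma Xpos al P : FD D P -> 0 < \sum_(m < N ^ K) P m `^ al.
Proof.
move=> HP; have [m [_ Hm]] := exist_big _ HP.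
have aN : 0 < a / N%:R by rewrite divr_gt0 // ?a_pos ?N0.
apply: (lt_le_trans _ (single_le (fun i => P i `^ al) m _)).
  by apply: powR_gt0; exact: lt_le_trans Hm.
by move=> i; exact: powR_ge0.
Qed.

Lemma part_alpha al : 0 < al -> al != 1 ->
  is_min_over (@FD R N K D) (fun P => renyi al P (@uniform R (N ^ K)%N))
       ((al - 1)^-1 *
          ln (N%:R * (a / N%:R) `^ al + (NK - N%:R) * (b / (NK - N%:R)) `^ al)
        + ln NK).
Proof.
move=> a0 a1; split.
  exists Ps; split; first exact: FD_Ps.
  by rewrite renyiE ?Xstar // -Xstar; apply: Xpos; exact: FD_Ps.
move=> P HP; rewrite renyiE //; last exact: Xpos.
rewrite lerD2r.
have [S1 S2] := fd_split _ HP.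
have P0 : forall m, 0 <= P m by case: HP => [[]].
have V0 : 0 < N%:R * (a / N%:R) `^ al + (NK - N%:R) * (b / (NK - N%:R)) `^ al.
  by rewrite -Xstar; apply: Xpos; exact: FD_Ps.
have X0 := Xpos al P HP.
case: (ltgtP al 1) => al1; last by rewrite al1 eqxx in a1.
- rewrite ler_nM2l; last by rewrite invr_lt0 subr_lt0.
  rewrite ler_ln ?posrE // split_sum.
  have h1 := @grp_down _ _ _ _ _ cnt1 N0 P0 al a0 al1.
  have h2 := @grp_down _ _ _ _ _ cnt2 d0 P0 al a0 al1.
  rewrite S1 in h1; rewrite S2 in h2.
  exact: lerD.
- rewrite ler_pM2l; last by rewrite invr_gt0 subr_gt0.
  rewrite ler_ln ?posrE // split_sum.
  have h1 := @grp_up _ _ _ _ _ cnt1 N0 P0 al al1.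
  have h2 := @grp_up _ _ _ _ _ cnt2 d0 P0 al al1.
  rewrite S1 in h1; rewrite S2 in h2.
  exact: lerD.
Qed.

Lemma renyi1E P : prob_vec P ->
  renyi1 P (@uniform R (N ^ K)%N) = \sum_(m < N ^ K) P m * ln (P m) + ln NK.
Proof.
move=> [P0 P1]; rewrite /renyi1 /uniform.
transitivity (\sum_(m < N ^ K) (P m * ln (P m) + P m * ln NK)).
  apply: eq_bigr => m _.
  have [->|pm] := eqVneq (P m) 0; first by rewrite !mul0r addr0.
  have pp : 0 < P m by rewrite lt_def pm P0.
  by rewrite invrK lnM ?posrE ?NK0 // mulrDr.
by rewrite big_split /= -big_distrl /= P1 mul1r.
Qed.

Lemma part1 :
  is_min_over (@FD R N K D) (fun P => renyi1 P (@uniform R (N ^ K)%N))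
    (a * ln (a / N%:R) + b * ln (b / (NK - N%:R)) + ln NK).
Proof.
have n0 := N0; have dd := d0.
split.
  exists Ps; split; first exact: FD_Ps.
  have [H _] := FD_Ps.
  rewrite renyi1E // split_sum (@sum_c _ (a / N%:R * ln (a / N%:R))); last first.
    by move=> m Hm; rewrite /Ps Hm.
  rewrite (@sum_n _ (b / (NK - N%:R) * ln (b / (NK - N%:R)))); last first.
    by move=> m Hm; rewrite /Ps (negbTE Hm).
  by field; apply/andP; split; rewrite gt_eqF.
move=> P HP; have [H _] := HP; rewrite renyi1E // lerD2r split_sum.
have [S1 S2] := fd_split _ HP.
have P0 : forall m, 0 <= P m by case: HP => [[]].
have h1 := @grp_ln _ _ _ _ _ cnt1 N0 P0.
have h2 := @grp_ln _ _ _ _ _ cnt2 d0 P0.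
rewrite S1 in h1; rewrite S2 in h2.
exact: lerD.
Qed.

Lemma part_inf :
  is_min_over (@FD R N K D) (fun P => renyi_inf P (@uniform R (N ^ K)%N))
    (ln (a / N%:R) + ln NK).
Proof.
have n0 := N0; have nk := NK0.
have aN : 0 < a / N%:R by rewrite divr_gt0 // ?a_pos ?N0.
have v0 : 0 < a / N%:R * NK by rewrite mulr_gt0.
have mE : forall P : 'I_(N ^ K) -> R, renyi_inf P (@uniform R (N ^ K)%N) =
    ln (\big[Num.max/0]_(m < N ^ K) (P m * NK)).
  by move=> P; rewrite /renyi_inf /uniform; congr ln; apply: eq_bigr => m _; rewrite invrK.
rewrite -lnM ?posrE //.
split.
  exists Ps; split; first exact: FD_Ps.
  rewrite mE; congr ln; apply/le_anti/andP; split.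
    apply: bigmax_le; first exact: ltW.
    move=> m _; rewrite ler_pM2r // /Ps; case: ifP => _ //; exact: key_ba.
  have m0 : cond (Ordinal (leq_ltn_trans (leq0n N) NltNK)) by rewrite /= (leq_trans _ hN).
  apply: le_trans (le_bigmax _ _ (Ordinal (leq_ltn_trans (leq0n N) NltNK))).
  by rewrite /Ps m0.
move=> P HP; rewrite mE.
have [m [_ Hm]] := exist_big _ HP.
have Hle : a / N%:R * NK <= \big[Num.max/0]_(m < N ^ K) (P m * NK).
  apply: le_trans (le_bigmax _ _ m).
  by rewrite ler_pM2r.
by rewrite ler_ln ?posrE // (lt_le_trans v0 Hle).
Qed.

End Main.

Theorem theorem1 (R : realType) (N K : nat) (D : R)
  (hN : (2 <= N)%N) (hK : (2 <= K)%N)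
  (hD1 : 1 <= D) (hD2 : D <= (Ccost R N K)^-1) :
  let a : R := 1 - (N%:R - 1) * (D - 1) in
  let b : R := (N%:R - 1) * (D - 1) in
  let NK : R := (N ^ K)%N%:R in
  (forall alpha : R, 0 < alpha -> alpha != 1 ->
     is_min_over (@FD R N K D) (fun P => renyi alpha P (@uniform R (N ^ K)%N))
       ((alpha - 1)^-1 *
          ln (N%:R * (a / N%:R) `^ alpha + (NK - N%:R) * (b / (NK - N%:R)) `^ alpha)
        + ln NK)) /\
  is_min_over (@FD R N K D) (fun P => renyi1 P (@uniform R (N ^ K)%N))
    (a * ln (a / N%:R) + b * ln (b / (NK - N%:R)) + ln NK) /\
  is_min_over (@FD R N K D) (fun P => renyi_inf P (@uniform R (N ^ K)%N))
    (ln (a / N%:R) + ln NK).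
Proof.
move=> a b NK; split; last split.
- move=> al a0 a1; exact: (@part_alpha R N K D hN hK hD1 hD2 al a0 a1).
- exact: (@part1 R N K D hN hK hD1 hD2).
- exact: (@part_inf R N K D hN hK hD1 hD2).
Qed.
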